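(* Let $n\ge1$ and let $G$ be a compact group which is not nilpotent of class at most $n$. Then $d^{(n)}(G)\le\frac{2^{n+2}-3}{2^{n+2}}$.
   Context: For a compact group $X$, $\mu_X$ denotes its normalized Haar measure and $\mu_X^m$ the product measure on $X^m$. Commutators: $[x,y]=x^{-1}y^{-1}xy$, $[x_1,\dots,x_{k+1}]=[[x_1,\dots,x_k],x_{k+1}]$. For a compact group $X$, $d^{(n)}(X)=\mu_X^{n+1}(\{(x_1,\dots,x_{n+1})\in X^{n+1}: [x_1,\dots,x_{n+1}]=1\})$. *)

(* Defs.v *)
From HB Require Import structures.
From mathcomp Require Import all_boot all_order all_algebra.
From mathcomp Require Import all_classical all_reals all_analysis.

Set Implicit Arguments.
Unset Strict Implicit.
Unset Printing Implicit Defensive.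

Import Order.TTheory GRing.Theory Num.Theory.

Local Open Scope classical_set_scope.

(* A type carrying a (possibly infinite) group structure (mathcomp's
   monoid.v [groupType]) and a topology (plus an irrelevant default point,
   required by mathcomp-analysis to build the Borel measurable space). *)
HB.structure Definition TopGroup := {G of Group G & Topological G & Pointed G}.
Notation topGroupType := TopGroup.type.

Definition compact_group (G : topGroupType) : Prop :=
  [/\ continuous (fun p : G * G => monoid.mul p.1 p.2),
      continuous (@monoid.inv G),
      hausdorff_space G &
      compact [set: G] ].

Notation borelType G := (g_sigma_algebraType (@open G)).

Definition normalized_haar (R : realType) (G : topGroupType)
    (mu : measure (borelType G) R) : Prop :=
  [/\ mu [set: borelType G] = 1%E,
      (forall (g : G) (A : set (borelType G)), measurable A ->
          mu [set monoid.mul g x | x in A] = mu A) &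
      (forall A : set (borelType G), measurable A ->
          mu A = ereal_inf [set mu U | U in [set U : set G | open U /\ A `<=` U]])].

Definition is_subgroup (G : groupType) (H : set G) : Prop :=
  [/\ H (@monoid.one G),
      (forall x y, H x -> H y -> H (monoid.mul x y)) &
      (forall x, H x -> H (monoid.inv x))].

Definition subgroup_gen (G : groupType) (A : set G) : set G :=
  \bigcap_(H in [set H : set G | is_subgroup H /\ A `<=` H]) H.

(* Lower central series: lower_central G k = gamma_(k+1)(G), i.e.
   gamma_1 = G, gamma_(k+1) = [gamma_k, G]. *)
Fixpoint lower_central (G : groupType) (k : nat) : set G :=
  if k is k'.+1 then
    subgroup_gen [set commg x y | x in @lower_central G k' & y in [set: G]]
  else [set: G].

Definition nilpotent_class_le (G : groupType) (n : nat) : Prop :=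
  @lower_central G n = [set @monoid.one G].

(* Left-normed commutator [x1, ..., xk] = [[x1, ..., x_(k-1)], xk]
   with commg x y = x^-1 y^-1 x y; the empty sequence gives 1. *)
Definition left_commutator (G : groupType) (s : seq G) : G :=
  if s is x :: s' then foldl (@commg G) x s' else @monoid.one G.

(* Iterated integral  int ... int f(x1, ..., xk) dmu(xk) ... dmu(x1)
   This is the integral against the product (Radon) measure mu^k. *)
Fixpoint iter_integral (R : realType) (G : topGroupType)
    (mu : measure (borelType G) R) (k : nat)
    (f : seq G -> \bar R) : \bar R :=
  if k is k'.+1 then
    (\int[mu]_(x in [set: borelType G])
        iter_integral mu k' (fun s => f (x :: s)))%E
  else f [::].

Definition dn (R : realType) (G : topGroupType)
    (mu : measure (borelType G) R) (n : nat) : \bar R :=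
  iter_integral mu n.+1
    (fun s => ((\1_[set t : seq G | left_commutator t = @monoid.one G] s : R)%:E)).

(* Main.v *)
Require Import Defs.
From HB Require Import structures.
From mathcomp Require Import all_boot all_order all_algebra.
From mathcomp Require Import all_classical all_reals all_analysis.
From mathcomp Require Import measurable_realfun.
From mathcomp Require Import lra ring.

Import Order.TTheory GRing.Theory Num.Theory.
Local Open Scope ring_scope.

Section GroupPart.
Local Open Scope classical_set_scope.
Variable G : groupType.
Local Open Scope group_scope.
Implicit Types (x y z g h : G).

Ltac gnorm := rewrite /commg /conjg ?invgM ?invgK ?mulgA ?mulgK ?mulgVK ?mulgV ?mulVg ?mul1g ?mulg1.

Definition zeta (m : nat) : set G :=
  [set y | forall s : seq G, size s = m -> left_commutator (y :: s) = 1].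

Lemma zeta0 y : zeta 0 y <-> y = 1.
Proof.
split; first by move=> /(_ [::] erefl).
by move=> -> [|//].
Qed.

Lemma zetaS m y : zeta m.+1 y <-> forall g, zeta m (commg y g).
Proof.
split.
  by move=> H g s hs; apply: (H (g :: s)); rewrite /= hs.
by move=> H [//|g s] /= [hs]; exact: (H g s hs).
Qed.

Definition nsub (N : set G) :=
  [/\ N 1, (forall x y, N x -> N y -> N (x * y)),
      (forall x, N x -> N x^-1) & (forall x h, N x -> N (x ^ h))].

Lemma commMl y z g : commg (y * z) g = (commg y g) ^ z * commg z g.
Proof. by gnorm. Qed.
Lemma commVl y g : commg y^-1 g = ((commg y g)^-1) ^ (y^-1).
Proof. by gnorm. Qed.
Lemma commJl y h g : commg (y ^ h) g = (commg y (g ^ h^-1)) ^ h.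
Proof. by gnorm. Qed.
Lemma commMr y (x1 x2 : G) : commg y (x1 * x2) = commg y x2 * (commg y x1) ^ x2.
Proof. by gnorm. Qed.
Lemma commVr y x : commg y x^-1 = ((commg y x)^-1) ^ x^-1.
Proof. by gnorm. Qed.

Lemma zeta_nsub m : nsub (zeta m).
Proof.
elim: m => [|m [N1 NM NV NJ]].
  split.
  - by apply/zeta0.
  - by move=> x y /zeta0 -> /zeta0 ->; apply/zeta0; rewrite mulg1.
  - by move=> x /zeta0 ->; apply/zeta0; rewrite invg1.
  - by move=> x h /zeta0 ->; apply/zeta0; rewrite conj1g.
split.
- by apply/zetaS => g; rewrite comm1g.
- move=> x y /zetaS Hx /zetaS Hy; apply/zetaS => g.
  by rewrite commMl; apply: NM => //; apply: NJ.
- move=> x /zetaS Hx; apply/zetaS => g.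
  by rewrite commVl; apply: NJ; apply: NV.
- move=> x h /zetaS Hx; apply/zetaS => g.
  by rewrite commJl; apply: NJ.
Qed.

Definition Bset m y : set G := [set x | zeta m (commg y x)].

Lemma Bset_sub m y : is_subgroup (Bset m y).
Proof.
have [N1 NM NV NJ] := zeta_nsub m.
split.
- by rewrite /Bset /= commg1.
- by move=> x1 x2 h1 h2; rewrite /Bset /= commMr; apply: NM => //; apply: NJ.
- by move=> x h; rewrite /Bset /= commVr; apply: NJ; apply: NV.
Qed.

Lemma zeta_Bset m y x : zeta m.+1 x -> Bset m y x.
Proof.
have [N1 NM NV NJ] := zeta_nsub m.
by move=> /zetaS /(_ y) /NV; rewrite invgR.
Qed.

Lemma Bset_self m y : Bset m y y.
Proof. by have [N1 _ _ _] := zeta_nsub m; rewrite /Bset /= commgg. Qed.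

Lemma zeta_nsub_is m : is_subgroup (zeta m).
Proof. by have [N1 NM NV NJ] := zeta_nsub m; split. Qed.

Lemma lower_central_zeta n : (forall y, zeta n y) ->
  forall j, (j <= n)%N -> @lower_central G j `<=` zeta (n - j).
Proof.
move=> Hn; elim=> [|j IH] hj; first by rewrite subn0 => y _; exact: Hn.
have hj' : (j <= n)%N by apply: ltnW.
move=> x /= Hx; apply: Hx; split; first exact: zeta_nsub_is.
move=> _ [a /(IH hj') Ha] [b _ <-].
by move: Ha; rewrite -subnSK // => /zetaS; apply.
Qed.

Lemma nil_of_zeta n : (forall y, zeta n y) -> nilpotent_class_le G n.
Proof.
move=> Hn; rewrite /nilpotent_class_le; apply/seteqP; split.
  move=> x /(@lower_central_zeta n Hn n (leqnn n)); rewrite subnn => /zeta0 ->.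
  by [].
move=> _ ->; case: n Hn => [//|n] Hn /=.
by move=> H [[H1 _ _] _].
Qed.
End GroupPart.
Section Top.
Local Open Scope classical_set_scope.
Variable G : topGroupType.
Hypothesis cG : compact_group G.
Local Open Scope group_scope.

Lemma cont_mul (T : topologicalType) (f h : T -> G) :
  continuous f -> continuous h -> continuous (fun x => f x * h x).
Proof.
move=> cf ch x; apply: continuous2_cvg; [|exact: cf|exact: ch].
by case: cG => cm _ _ _; exact: (cm (f x, h x)).
Qed.

Lemma cont_inv (T : topologicalType) (f : T -> G) :
  continuous f -> continuous (fun x => (f x)^-1).
Proof.
move=> cf x; case: cG => _ ci _ _.
exact: (continuous_comp (cf x) (ci (f x))).
Qed.

Lemma cont_commg (T : topologicalType) (f h : T -> G) :
  continuous f -> continuous h -> continuous (fun x => commg (f x) (h x)).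
Proof.
move=> cf ch; rewrite /commg /conjg.
apply: cont_mul; first exact: cont_inv.
apply: cont_mul; first exact: cont_inv.
exact: cont_mul.
Qed.

Lemma closed1 : closed [set (1 : G)].
Proof.
by case: cG => _ _ hG _; exact/accessible_closed_set1/hausdorff_accessible.
Qed.

Lemma closed_meas (A : set G) : closed A -> measurable (A : set (borelType G)).
Proof.
move=> cA; rewrite -(setCK A); apply: measurableC.
by apply: sub_gen_smallest; rewrite /= openC.
Qed.

Lemma cont_fold (T : topologicalType) (f : T -> G) (s : seq G) :
  continuous f -> continuous (fun x => foldl (@commg G) (f x) s).
Proof.
elim: s f => [//|a s IH] f cf /=.
apply: (IH (fun x => commg (f x) a)).
by apply: cont_commg => //; exact: cst_continuous.
Qed.

Lemma closed_zeta m : closed (@zeta G m : set G).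
Proof.
have -> : (@zeta G m : set G) = \bigcap_(s in [set s : seq G | size s = m])
    ((fun y => left_commutator (y :: s)) @^-1` [set 1]).
  by apply/seteqP; split => y Hy s hs; exact: Hy.
apply: closed_bigI => s _; apply: preimage_closed; last exact: closed1.
move=> y _; have := @cont_fold _ id s; apply.
exact: (fun x => @cvg_id _ _).
Qed.

Lemma closed_Bset m y : closed (@Bset G m y : set G).
Proof.
apply: preimage_closed; last exact: closed_zeta.
move=> x _; apply: (@cont_commg _ (fun _ => y) id); last exact: (fun x => @cvg_id _ _).
exact: cst_continuous.
Qed.

Lemma closed_trans (A : set G) g : closed A -> closed [set g * x | x in A].
Proof.
move=> cA; have -> : [set g * x | x in A] = (fun x => g^-1 * x) @^-1` A.
  apply/seteqP; split => x.
    by move=> [a Aa <-]; rewrite /= mulKg.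
  by move=> /= Ax; exists (g^-1 * x) => //; rewrite mulVKg.
apply: preimage_closed => // x _.
apply: (@cont_mul _ (fun _ => g^-1) id); last exact: (fun x => @cvg_id _ _).
exact: cst_continuous.
Qed.
End Top.
Section Meas.
Local Open Scope classical_set_scope.
Local Open Scope ring_scope.
Variables (R : realType) (G : topGroupType) (mu : measure (borelType G) R).
Hypothesis cG : compact_group G.
Hypothesis hmu : normalized_haar mu.

Lemma muT : mu setT = 1%E.
Proof. by case: hmu. Qed.

Definition mr (A : set G) : R := fine (mu A).

Lemma muE (A : set (borelType G)) : measurable A -> mu A = (mr A)%:E.
Proof.
move=> mA; rewrite /mr fineK // ge0_fin_numE //.
apply: (le_lt_trans (y := 1%E)); last by rewrite ltry.
by rewrite -muT; apply: le_measure => //; rewrite inE.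
Qed.

Lemma mr_ge0 A : 0 <= mr A.
Proof. by rewrite /mr fine_ge0. Qed.

Lemma mr_le1 (A : set (borelType G)) : measurable A -> mr A <= 1.
Proof.
move=> mA; rewrite -lee_fin -muE // -muT.
by apply: le_measure => //; rewrite inE.
Qed.

Lemma half_lemma (A K : set G) (y : G) :
  is_subgroup A -> closed A -> measurable (K : set (borelType G)) ->
  A `<=` K -> ~ A y -> (forall a, A a -> K (monoid.mul y a)) ->
  mr A + mr A <= mr K.
Proof.
move=> [A1 AM AV] cA mK AK nAy yAK.
have mA : measurable (A : set (borelType G)) by exact: closed_meas.
have myA : measurable ([set monoid.mul y x | x in A] : set (borelType G)).
  by apply: closed_meas => //; exact: closed_trans.
have dis : A `&` [set monoid.mul y x | x in A] = set0.
  apply/seteqP; split => // x [Ax [a Aa eq]]; apply: nAy.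
  have -> : y = monoid.mul x (monoid.inv a) by rewrite -eq monoid.mulgK.
  by apply: AM => //; apply: AV.
have := @le_measure _ _ _ mu (A `|` [set monoid.mul y x | x in A]) K.
rewrite !inE => /(_ (measurableU _ _ mA myA) mK).
have sub : A `|` [set monoid.mul y x | x in A] `<=` K.
  by move=> x [/AK//|[a Aa <-]]; exact: yAK.
move=> /(_ sub); case: hmu => _ inv _; rewrite measureU //.
have e : mu [set monoid.mul y x | x in A] = mu A by exact: inv.
move=> H; rewrite -lee_fin EFinD -(muE _ mA) -(muE _ mK).
rewrite -{2}e; exact: H.
Qed.

Lemma int_mono (f g : G -> \bar R) : (forall x, 0 <= f x)%E ->
  (forall x, f x <= g x)%E ->
  (\int[mu]_(x in [set: borelType G]) f x <= \int[mu]_(x in [set: borelType G]) g x)%E.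
Proof.
move=> f0 fg.
have g0 : forall x, (0 <= g x)%E by move=> x; exact: le_trans (f0 x) (fg x).
rewrite (ge0_integralTE mu f0) (ge0_integralTE mu g0).
apply: ereal_sup_le => _ [h hf <-]; exists h => //= x.
exact: le_trans (hf x) (fg x).
Qed.

Lemma int_step (B : set G) (c : R) : measurable (B : set (borelType G)) ->
  0 <= c -> c <= 1 ->
  (\int[mu]_(x in [set: borelType G]) (c%:E + (1 - c)%:E * (\1_B x)%:E) =
   (c + (1 - c) * mr B)%:E)%E.
Proof.
move=> mB c0 c1.
have mI : measurable_fun [set: borelType G] (fun x => (\1_B x)%:E : \bar R).
  by apply/measurable_EFinP; exact: measurable_indic.
have i0 : forall x : borelType G, (0 <= (\1_B x)%:E :> \bar R)%E.
  by move=> x; rewrite lee_fin indicE; case: (_ \in _).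
have c0' : 0 <= 1 - c by rewrite subr_ge0.
have i1 : forall x : borelType G, (0 <= (1 - c)%:E * (\1_B x)%:E :> \bar R)%E.
  by move=> x; rewrite mule_ge0 // lee_fin.
rewrite (ge0_integralD mu (measurableT) (f1 := fun _ => c%:E)) //; last first.
  apply: measurable_funeM; exact: mI.
rewrite integral_cst // muT mule1 ge0_integralZl_EFin //.
by rewrite integral_indic // setIT (muE _ mB) -EFinM -EFinD.
Qed.

Definition Sone : set (seq G) := [set t | left_commutator t = @monoid.one G].
Definition pk k (y : G) : \bar R :=
  iter_integral mu k (fun s => ((\1_Sone (y :: s) : R)%:E)).

Lemma pkS k y : pk k.+1 y =
  (\int[mu]_(x in [set: borelType G]) pk k (commg y x))%E.
Proof. by []. Qed.

Lemma dn_pk n : dn mu n = (\int[mu]_(x in [set: borelType G]) pk n x)%E.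
Proof. by []. Qed.

Lemma pk_ge0 k y : (0 <= pk k y)%E.
Proof.
elim: k y => [|k IH] y.
  by rewrite /pk /= lee_fin indicE; case: (_ \in _).
by rewrite pkS; apply: integral_ge0 => x _; exact: IH.
Qed.

Lemma pk_le1 k y : (pk k y <= 1)%E.
Proof.
elim: k y => [|k IH] y.
  by rewrite /pk /= lee_fin indicE; case: (_ \in _).
rewrite pkS; apply: le_trans (@int_mono _ (fun _ => 1%E) _ _) _.
- by move=> x; exact: pk_ge0.
- by move=> x; exact: IH.
by rewrite integral_cst // muT mule1.
Qed.

Definition ck k : R := 1 - (2 ^+ k)^-1.

Lemma mrT : mr setT = 1.
Proof. by rewrite /mr muT. Qed.

Lemma tk_pos k : 0 < (2 ^+ k : R)^-1.
Proof. by rewrite invr_gt0 exprn_gt0. Qed.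

Lemma tk_le1 k : (2 ^+ k : R)^-1 <= 1.
Proof. by rewrite invf_le1 ?exprn_gt0 //; apply: exprn_ege1; rewrite ler1n. Qed.

Lemma int_bound (f : G -> \bar R) (B : set G) (c : R) :
  measurable (B : set (borelType G)) -> 0 <= c -> c <= 1 ->
  (forall x, 0 <= f x)%E ->
  (forall x, B x -> f x <= 1)%E -> (forall x, ~ B x -> f x <= c%:E)%E ->
  (\int[mu]_(x in [set: borelType G]) f x <= (c + (1 - c) * mr B)%:E)%E.
Proof.
move=> mB c0 c1 f0 fB fnB; rewrite -int_step //.
apply: int_mono => // x; rewrite indicE.
case: (pselect (B x)) => Bx.
  by rewrite mem_set // mule1 -EFinD addrC subrK; exact: fB.
by rewrite memNset // mule0 adde0; exact: fnB.
Qed.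

Lemma pk_bound k y : ~ @zeta G k y -> (pk k y <= (ck k)%:E)%E.
Proof.
elim: k y => [|k IH] y hy.
  rewrite /pk /= /ck expr0 invr1 subrr lee_fin indicE memNset //.
  by move=> /= e; apply: hy; apply/(@zeta0 G).
have [g hg] : exists g, ~ @zeta G k (commg y g).
  apply: contrapT => H; apply: hy; apply/(@zetaS G) => g.
  by apply: contrapT => ng; apply: H; exists g.
have cB := @closed_Bset G cG k y.
have mB : measurable (Bset G k y : set (borelType G)) by exact: closed_meas.
have hB := @half_lemma (Bset G k y) setT g (@Bset_sub G k y) cB (@measurableT _ (borelType G))
  (fun _ _ => I) hg (fun _ _ => I).
rewrite mrT in hB.
have t0 := tk_pos k; have t1 := tk_le1 k.
rewrite pkS; apply: le_trans (@int_bound (fun x => pk k (commg y x)) (Bset G k y) (ck k) _ _ _ _ _ _) _.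
- exact: mB.
- by rewrite /ck subr_ge0.
- by rewrite /ck lerBlDr lerDl ltW.
- by move=> x; exact: pk_ge0.
- by move=> x _; exact: pk_le1.
- by move=> x nx; exact: IH.
rewrite lee_fin /ck exprS invfM.
set t := (2 ^+ k : R)^-1 in t0 t1 *; set b := mr _ in hB *.
have h2 : (2^-1 : R) = 1/2 by rewrite div1r.
rewrite h2; have : 0 <= (1/2 - b) * t by apply: mulr_ge0; lra.
lra.
Qed.

Lemma main_bound n : (1 <= n)%N -> ~ nilpotent_class_le G n ->
  (dn mu n <= ((2 ^+ (n + 2) - 3) / 2 ^+ (n + 2) : R)%:E)%E.
Proof.
move=> n1 nnil.
have [y0 hy0] : exists y, ~ zeta G n y.
  apply: contrapT => H; apply: nnil; apply: nil_of_zeta => y.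
  by apply: contrapT => ny; apply: H; exists y.
case: n n1 nnil hy0 => // n _ _ hy0.
have [g hg] : exists g, ~ zeta G n (commg y0 g).
  apply: contrapT => H; apply: hy0; apply/(@zetaS G) => g.
  by apply: contrapT => ng; apply: H; exists g.
have cA := @closed_zeta G cG n.+1.
have mA : measurable (zeta G n.+1 : set (borelType G)) by exact: closed_meas.
have cK := @closed_Bset G cG n y0.
have mK : measurable (Bset G n y0 : set (borelType G)) by exact: closed_meas.
have [K1 KM KV] := @Bset_sub G n y0.
have hA := @half_lemma (zeta G n.+1) (Bset G n y0) y0 (@zeta_nsub_is G n.+1) cA mK
  (@zeta_Bset G n y0) hy0 (fun a ha => KM _ _ (@Bset_self G n y0) (@zeta_Bset G n y0 a ha)).
have hK := @half_lemma (Bset G n y0) setT g (@Bset_sub G n y0) cK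
  (@measurableT _ (borelType G)) (fun _ _ => I) hg (fun _ _ => I).
rewrite mrT in hK.
have t0 := tk_pos n.+1; have t1 := tk_le1 n.+1.
rewrite dn_pk; apply: le_trans (@int_bound (fun x => pk n.+1 x) (zeta G n.+1) (ck n.+1) _ _ _ _ _ _) _.
- exact: mA.
- by rewrite /ck subr_ge0.
- by rewrite /ck lerBlDr lerDl ltW.
- by move=> x; exact: pk_ge0.
- by move=> x _; exact: pk_le1.
- by move=> x nx; exact: pk_bound.
rewrite lee_fin /ck.
have nz : (2 ^+ n.+1 : R) != 0 by rewrite expf_neq0.
have -> : ((2 ^+ (n.+1 + 2) - 3) / 2 ^+ (n.+1 + 2) : R) = 1 - 3 / 4 * (2 ^+ n.+1)^-1.
  rewrite exprD; field; by rewrite nz.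
set t := (2 ^+ n.+1 : R)^-1 in t0 t1 *.
set a := mr (zeta G n.+1) in hA *; set b := mr (Bset G n y0) in hA hK *.
have : 0 <= (1/4 - a) * t by apply: mulr_ge0; lra.
lra.
Qed.
End Meas.

Theorem corollary4p1 (R : realType) (G : topGroupType)
    (mu : measure (borelType G) R) (n : nat) :
  (1 <= n)%N ->
  compact_group G ->
  normalized_haar mu ->
  ~ nilpotent_class_le G n ->
  (dn mu n <= ((2 ^+ (n + 2) - 3) / 2 ^+ (n + 2) : R)%:E)%E.
Proof.
move=> n1 cG hmu nnil.
exact: (@main_bound R G mu cG hmu n n1 nnil).
Qed.
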